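(* Let $\mathcal A$ be an $\mathbf{HpsUL}^\ast_\omega$-chain. Let $B\subseteq A$ with $\{e,f,\bot,\top\}\subseteq B$, and let $M$, $D$, $\cdot^D$ be as described in the context. Then for all $X,Y\in D$, $$X\cdot^DY\subseteq (e] \iff (X\cdot^DY)\cdot^DY\subseteq (e],$$ where $(e]=\{c\in M: c\le e\}$.
   Context: An $\mathbf{HpsUL}$-algebra is a structure $\mathcal A=\langle A,\wedge,\vee,\cdot,\backslash,/,e,f,\bot,\top\rangle$ such that: - it is a bounded lattice; - $\langle A,\cdot,e\rangle$ is a monoid; - $xy\le z$ iff $x\le z/y$ iff $y\le x\backslash z$; - for all $x,y,u,v$: $\lambda_u((x\vee y)\backslash x)\vee\rho_v((x\vee y)\backslash y)=e$, where $\lambda_a(b)=(a\backslash(ba))\wedge e$ and $\rho_a(b)=((ab)/a)\wedge e$. An $\mathbf{HpsUL}^\ast_\omega$-chain is a linearly ordered $\mathbf{HpsUL}$-algebra such that $xy\le e$ implies $yx\le e$, and $x\backslash e=x^2\backslash e$ for all $x$. Construction. $M$ is the submonoid of $\langle A,\cdot,e\rangle$ generated by $B$. For $a_1,a_2\in M$ and $b\in B$, put $(a_1^la_2^r)^{-1}(b]=\{c\in M: a_1ca_2\le b\}$. Let $\bar D$ be the set of all such sets. Let $D=\{\bigcap\chi:\chi\subseteq\bar D\}$, with the empty intersection equal to $M$. For $X\subseteq M$, let $C(X)$ be the intersection of all members of $\bar D$ containing $X$. For $X,Y\subseteq M$, let $XY=\{xy:x\in X,y\in Y\}$ and $X\cdot^DY=C(XY)$.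 *)

(* Defs.v *)
(* Signature of an HpsUL-algebra: <A, meet, join, mul, \ , /, e, f, bot, top>.
   ldiv x y = x \ y ,  rdiv x y = x / y. *)
Record HpsUL_sig := {
  car :> Type;
  meet : car -> car -> car;
  join : car -> car -> car;
  mul  : car -> car -> car;
  ldiv : car -> car -> car;
  rdiv : car -> car -> car;
  unit_e : car;
  const_f : car;
  bot : car;
  top : car }.

Definition le {A : HpsUL_sig} (x y : A) : Prop := meet A x y = x.

Definition lam {A : HpsUL_sig} (a b : A) : A :=
  meet A (ldiv A a (mul A b a)) (unit_e A).
Definition rho {A : HpsUL_sig} (a b : A) : A :=
  meet A (rdiv A (mul A a b) a) (unit_e A).

Definition is_HpsUL (A : HpsUL_sig) : Prop :=
  (forall x y z : A, meet A x (meet A y z) = meet A (meet A x y) z) /\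
  (forall x y z : A, join A x (join A y z) = join A (join A x y) z) /\
  (forall x y : A, meet A x y = meet A y x) /\
  (forall x y : A, join A x y = join A y x) /\
  (forall x y : A, meet A x (join A x y) = x) /\
  (forall x y : A, join A x (meet A x y) = x) /\
  (forall x : A, le (bot A) x) /\
  (forall x : A, le x (top A)) /\
  (forall x y z : A, mul A x (mul A y z) = mul A (mul A x y) z) /\
  (forall x : A, mul A (unit_e A) x = x) /\
  (forall x : A, mul A x (unit_e A) = x) /\
  (forall x y z : A, le (mul A x y) z <-> le x (rdiv A z y)) /\
  (forall x y z : A, le (mul A x y) z <-> le y (ldiv A x z)) /\
  (forall x y u v : A,
     join A (lam u (ldiv A (join A x y) x)) (rho v (ldiv A (join A x y) y))
     = unit_e A).

Definition is_HpsUL_star_omega_chain (A : HpsUL_sig) : Prop :=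
  is_HpsUL A /\
  (forall x y : A, le x y \/ le y x) /\
  (forall x y : A, le (mul A x y) (unit_e A) -> le (mul A y x) (unit_e A)) /\
  (forall x : A, ldiv A x (unit_e A) = ldiv A (mul A x x) (unit_e A)).

Inductive Mon {A : HpsUL_sig} (B : A -> Prop) : A -> Prop :=
  | Mon_gen : forall b, B b -> Mon B b
  | Mon_e : Mon B (unit_e A)
  | Mon_mul : forall x y, Mon B x -> Mon B y -> Mon B (mul A x y).

(* (a1^l a2^r)^{-1}(b] = { c in M : a1 c a2 <= b } *)
Definition resid_set {A : HpsUL_sig} (B : A -> Prop) (a1 a2 b : A) : A -> Prop :=
  fun c => Mon B c /\ le (mul A (mul A a1 c) a2) b.

(* Dbar: the set of all such sets (a1, a2 in M, b in B); sets are predicates,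
   set equality is extensional. *)
Definition Dbar {A : HpsUL_sig} (B : A -> Prop) (Y : A -> Prop) : Prop :=
  exists a1 a2 b, Mon B a1 /\ Mon B a2 /\ B b /\
    (forall c, Y c <-> resid_set B a1 a2 b c).

(* D = { intersections of subfamilies of Dbar }, empty intersection = M *)
Definition Dsets {A : HpsUL_sig} (B : A -> Prop) (X : A -> Prop) : Prop :=
  exists chi : (A -> Prop) -> Prop,
    (forall Y, chi Y -> Dbar B Y) /\
    (forall c, X c <-> (Mon B c /\ forall Y, chi Y -> Y c)).

Definition Cl {A : HpsUL_sig} (B : A -> Prop) (X : A -> Prop) : A -> Prop :=
  fun c => Mon B c /\
    forall Y, Dbar B Y -> (forall x, X x -> Y x) -> Y c.

Definition setmul {A : HpsUL_sig} (X Y : A -> Prop) : A -> Prop :=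
  fun c => exists x y, X x /\ Y y /\ c = mul A x y.

Definition mulD {A : HpsUL_sig} (B : A -> Prop) (X Y : A -> Prop) : A -> Prop :=
  Cl B (setmul X Y).

Definition down_e {A : HpsUL_sig} (B : A -> Prop) : A -> Prop :=
  fun c => Mon B c /\ le c (unit_e A).

Definition subset {T : Type} (X Y : T -> Prop) : Prop := forall x, X x -> Y x.

(* Main.v *)
Require Import Defs.

Theorem lemma3p7 (A : HpsUL_sig) (HA : is_HpsUL_star_omega_chain A)
  (B : A -> Prop)
  (He : B (unit_e A)) (Hf : B (const_f A)) (Hbot : B (bot A)) (Htop : B (top A)) :
  forall X Y : A -> Prop, Dsets B X -> Dsets B Y ->
    (subset (mulD B X Y) (down_e B) <->
     subset (mulD B (mulD B X Y) Y) (down_e B)).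
Proof.
  intros X Y [chiX [_ HX]] [chiY [_ HY]].
  destruct HA as [HL [Hlin [Hcyc Hom]]].
  destruct HL as [mA [jA [mC [jC [abs1 [abs2 [_ [_ [massoc [ml [mr [resr [resl _]]]]]]]]]]]]].
  set (e := unit_e A) in *.
  assert (lerefl : forall x : A, le x x).
  { intro x. pose proof (abs1 x (meet A x x)) as H. rewrite (abs2 x x) in H. exact H. }
  assert (letrans : forall a b c : A, le a b -> le b c -> le a c).
  { unfold le; intros a b c H1 H2. rewrite <- H1, <- mA, H2. reflexivity. }
  assert (monoR : forall a b c : A, le a b -> le (mul A a c) (mul A b c)).
  { intros a b c H. apply resr. apply letrans with b; auto.
    apply (proj1 (resr b c (mul A b c))). apply lerefl. }
  assert (monoL : forall a b c : A, le a b -> le (mul A c a) (mul A c b)).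
  { intros a b c H. apply resl. apply letrans with b; auto.
    apply (proj1 (resl c b (mul A c b))). apply lerefl. }
  assert (base : forall x w : A, le (mul A x w) e <-> le (mul A (mul A x x) w) e).
  { intros x w; split; intro H; apply resl; apply resl in H;
      [rewrite <- Hom | rewrite Hom]; exact H. }
  assert (omg1 : forall z x : A, le (mul A z x) e -> le (mul A (mul A z x) x) e).
  { intros z x H. apply (Hcyc x (mul A z x)). rewrite massoc. apply (Hcyc x (mul A x z)).
    rewrite massoc. apply (proj1 (base x z)). apply (Hcyc z x). exact H. }
  assert (omg2 : forall z x : A, le (mul A (mul A z x) x) e -> le (mul A z x) e).
  { intros z x H. apply (Hcyc x z). apply (proj2 (base x z)). rewrite <- massoc.
    apply (Hcyc (mul A x z) x). rewrite <- massoc. apply (Hcyc (mul A z x) x). exact H. }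
  assert (XM : forall c, X c -> Mon B c) by (intros c Hc; apply HX in Hc; tauto).
  assert (YM : forall c, Y c -> Mon B c) by (intros c Hc; apply HY in Hc; tauto).
  assert (ClM : forall S c, Cl B S c -> Mon B c) by (intros S c [H _]; exact H).
  assert (ClIn : forall (S : A -> Prop) c, (forall x, S x -> Mon B x) -> S c -> Cl B S c).
  { intros S c HS Hc. split; auto. }
  assert (DR : forall y, Mon B y -> Dbar B (resid_set B e y e)).
  { intros y Hy. exists e, y, e. split; [apply Mon_e|]. split; [exact Hy|]. split; [exact He|].
    intro c; tauto. }
  assert (De : forall c, resid_set B e e e c <-> down_e B c).
  { intro c; unfold resid_set, down_e. fold e. rewrite ml, mr. tauto. }
  assert (XYM : forall c, setmul X Y c -> Mon B c).
  { intros c [x [y [Hx [Hy ->]]]]. apply Mon_mul; auto. }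
  unfold subset, mulD. split.
  - intros H c Hc. apply De. apply Hc. apply DR, Mon_e.
    intros w [z [y [Hz [Hy ->]]]]. split. apply Mon_mul; eauto.
    rewrite ml. rewrite mr.
    assert (Hzy : resid_set B e y e z).
    { apply Hz. apply DR; auto.
      intros w [x [y1 [Hx [Hy1 ->]]]]. split. apply Mon_mul; auto.
      rewrite ml.
      assert (h1 : le (mul A x y1) e).
      { apply (H (mul A x y1)). apply ClIn; auto. exists x, y1; auto. }
      assert (h2 : le (mul A x y) e).
      { apply (H (mul A x y)). apply ClIn; auto. exists x, y; auto. }
      destruct (Hlin y1 y) as [Hle | Hle].
      + apply letrans with (mul A (mul A x y) y).
        apply monoR, monoL, Hle. apply omg1, h2.
      + apply letrans with (mul A (mul A x y1) y1).
        apply monoL, Hle. apply omg1, h1. }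
    destruct Hzy as [_ Hzy]. rewrite ml in Hzy. exact Hzy.
  - intros H c Hc. apply De. apply Hc. apply DR, Mon_e.
    intros w [x [y [Hx [Hy ->]]]]. split. apply Mon_mul; auto.
    rewrite ml, mr. apply (omg2 x y).
    apply (H (mul A (mul A x y) y)). apply ClIn.
    + intros v [z [y' [Hz [Hy' ->]]]]. apply Mon_mul; eauto.
    + exists (mul A x y), y. split; [|split; [exact Hy|reflexivity]]. apply ClIn; auto. exists x, y; auto.
Qed.
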